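(* Let $G$ be a (possibly infinite) cyclic graph with $\mathrm{wf}(G)=\frac pq$, where $p,q$ are relatively prime integers. If $v\in V$ is periodic, then its orbit has length $q$ and winding number $\gamma_q(v)=p$.
   Context: $S^1=\mathbb{R}/\mathbb{Z}$; $\preceq$/$\prec$ clockwise order; $\vec d(p,q)\in[0,1)$ clockwise distance. A directed graph has no loops and no pair of opposite edges; $N^+[G,v]=\{v\}\cup\{w:v\to w\}$. A directed graph with vertex set $V\subseteq S^1$ is cyclic if whenever $v\to u$ is an edge, $v\to w$ and $w\to u$ are edges for all $w\in V$ with $v\prec w\prec u\prec v$. For $0\le k<n/2$, $C_n^k$ is the cyclic graph on $\{0,\dots,n-1\}$ with edges $i\to i+s\bmod n$, $1\le s\le k$; a cyclic homomorphism is a directed-graph homomorphism weakly preserving cyclic order and non-constant when the domain has a directed cycle. For finite cyclic $G$, $\mathrm{wf}(G)=\sup\{k/n:\exists$ cyclic homomorphism $C_n^k\to G\}$; in general $\mathrm{wf}(G)=\sup\{\mathrm{wf}(G[W]):W\subseteq V$ finite$\}$. For $m\ge1$, $\gamma_m(v_0)=\sup\{\sum_{i=0}^{m-1}\vec d(v_i,v_{i+1}): v_{i+1}\in N^+[G,v_i]\}$. A vertex $v$ is periodic if there is $i\ge1$ such that $\gamma_i(v)$ is an integer and the supremum defining $\gamma_i(v)$ is achieved; the length of its orbit is the least such $i$, and its winding number is $\gamma_\ell(v)$ for that least $\ell$. *)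

(* Defs.v *)
From Stdlib Require Import Reals Lra Lia ZArith Arith List.
Open Scope R_scope.

(* Points of S^1 = R/Z are represented by reals; vertex sets are required to lie in [0,1). *)

Definition cd (p q : R) : R := frac_part (q - p).

(* weak cyclic order  a ⪯ b ⪯ c ⪯ a : going clockwise from a one meets b, then c
   (equalities allowed).  Equivalently d(a,b)+d(b,c)+d(c,a) <= 1. *)
Definition wcyc (a b c : R) : Prop := cd a b + cd b c + cd c a <= 1.

Definition directed_graph (V : R -> Prop) (E : R -> R -> Prop) : Prop :=
  (forall x, V x -> 0 <= x < 1) /\
  (forall v u, E v u -> V v /\ V u) /\
  (forall v, ~ E v v) /\
  (forall v u, E v u -> ~ E u v).

Definition cyclic_graph (V : R -> Prop) (E : R -> R -> Prop) : Prop :=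
  forall v u, E v u -> forall w, V w -> 0 < cd v w < cd v u -> E v w /\ E w u.

(* f : C_n^k -> G[W] is a cyclic homomorphism, W finite given by a list. *)
Definition cyclic_hom (E : R -> R -> Prop) (W : list R) (n k : nat) (f : nat -> R) : Prop :=
  (forall i, (i < n)%nat -> In (f i) W) /\
  (forall i s, (i < n)%nat -> (1 <= s <= k)%nat -> E (f i) (f ((i + s) mod n)%nat)) /\
  (forall i j l, (i < n)%nat -> (j < n)%nat -> (l < n)%nat ->
      wcyc (INR i / INR n) (INR j / INR n) (INR l / INR n) ->
      wcyc (f i) (f j) (f l)) /\
  ((1 <= k)%nat -> exists i j, (i < n)%nat /\ (j < n)%nat /\ f i <> f j).

Definition wf_set (E : R -> R -> Prop) (W : list R) (x : R) : Prop :=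
  exists n k f, (1 <= n)%nat /\ (2 * k < n)%nat /\ cyclic_hom E W n k f /\
    x = INR k / INR n.

Definition wf_is (V : R -> Prop) (E : R -> R -> Prop) (r : R) : Prop :=
  is_lub (fun x => exists W : list R, (forall y, In y W -> V y) /\
                     is_lub (wf_set E W) x) r.

Definition walk (E : R -> R -> Prop) (v : R) (m : nat) (w : nat -> R) : Prop :=
  w O = v /\ forall i, (i < m)%nat -> w (S i) = w i \/ E (w i) (w (S i)).

Fixpoint walk_len (w : nat -> R) (m : nat) : R :=
  match m with
  | O => 0
  | S m' => walk_len w m' + cd (w m') (w m)
  end.

(* the set whose supremum is gamma_m(v) *)
Definition gamma_set (E : R -> R -> Prop) (v : R) (m : nat) (x : R) : Prop :=
  exists w, walk E v m w /\ x = walk_len w m.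

Definition periodic_at (E : R -> R -> Prop) (v : R) (i : nat) : Prop :=
  (1 <= i)%nat /\ exists g, is_lub (gamma_set E v i) g /\
                   (exists z : Z, g = IZR z) /\ gamma_set E v i g.

Definition periodic (E : R -> R -> Prop) (v : R) : Prop := exists i, periodic_at E v i.

Definition orbit_length (E : R -> R -> Prop) (v : R) (l : nat) : Prop :=
  periodic_at E v l /\ forall i, periodic_at E v i -> (l <= i)%nat.

(* Main.v *)
Require Import Defs.
From Stdlib Require Import Reals ZArith List.
From Stdlib Require Import Lra Lia Arith.
From Stdlib Require Import ClassicalEpsilon Classical.
Open Scope R_scope.

Definition lift (x X : R) : Prop := exists j : Z, X = x + IZR j.

Lemma int_small : forall j : Z, -1 < IZR j < 1 -> j = 0%Z.
Proof.
  intros j [H1 H2]. apply lt_IZR in H2. assert (-1 < j)%Z.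
  { apply lt_IZR. replace (IZR (-1)) with (-1) by (simpl; lra). exact H1. }
  lia.
Qed.

Lemma frac_shift : forall r j, 0 <= r < 1 -> frac_part (r + IZR j) = r.
Proof.
  intros r j Hr. unfold frac_part, Int_part.
  assert (Hu : (j + 1)%Z = up (r + IZR j)).
  { apply tech_up; rewrite plus_IZR; simpl; lra. }
  rewrite <- Hu. rewrite minus_IZR, plus_IZR. simpl. lra.
Qed.

Lemma cd_range : forall x y, 0 <= cd x y < 1.
Proof. intros x y. unfold cd. destruct (base_fp (y - x)). lra. Qed.

Lemma cd_int : forall x y, exists j, cd x y = y - x + IZR j.
Proof.
  intros x y. unfold cd, frac_part. exists (- Int_part (y - x))%Z.
  rewrite opp_IZR. lra.
Qed.

Lemma lift_refl : forall x, lift x x.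
Proof. intros x; exists 0%Z; simpl; lra. Qed.

Lemma lift_add_int : forall x X j, lift x X -> lift x (X + IZR j).
Proof. intros x X j [i Hi]. exists (i + j)%Z. rewrite plus_IZR. lra. Qed.

Lemma lift_step : forall x y X, lift x X -> lift y (X + cd x y).
Proof.
  intros x y X [i Hi]. destruct (cd_int x y) as [j Hj].
  exists (i + j)%Z. rewrite plus_IZR. lra.
Qed.

Lemma cd_lift : forall x y X Y, lift x X -> lift y Y -> 0 <= Y - X < 1 -> cd x y = Y - X.
Proof.
  intros x y X Y [i Hi] [j Hj] H. unfold cd.
  replace (y - x) with ((Y - X) + IZR (i - j)) by (rewrite minus_IZR; lra).
  apply frac_shift; auto.
Qed.

Lemma lift_same : forall x y X, 0 <= x < 1 -> 0 <= y < 1 -> lift x X -> lift y X -> x = y.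
Proof.
  intros x y X Hx Hy [i Hi] [j Hj].
  assert (i - j = 0)%Z.
  { apply int_small. rewrite minus_IZR. lra. }
  assert (IZR i = IZR j) by (f_equal; lia). lra.
Qed.

Lemma lift_diff_int : forall x X Y, lift x X -> lift x Y -> exists j, Y = X + IZR j.
Proof. intros x X Y [i Hi] [j Hj]. exists (j - i)%Z. rewrite minus_IZR. lra. Qed.

Lemma cd_self : forall x, cd x x = 0.
Proof.
  intros x. rewrite (cd_lift x x x x); try apply lift_refl; lra.
Qed.

Lemma cd_zero : forall x y, 0 <= x < 1 -> 0 <= y < 1 -> cd x y = 0 -> x = y.
Proof.
  intros x y Hx Hy H. apply (lift_same x y x Hx Hy (lift_refl x)).
  assert (L : lift y (x + cd x y)) by (apply lift_step, lift_refl).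
  rewrite H, Rplus_0_r in L. exact L.
Qed.

Lemma cd_pos : forall x y, 0 <= x < 1 -> 0 <= y < 1 -> x <> y -> 0 < cd x y.
Proof.
  intros x y Hx Hy Hn. destruct (cd_range x y) as [H1 H2].
  destruct H1 as [H1|H1]; auto. exfalso. apply Hn. apply cd_zero; auto.
Qed.

Lemma cd_anti : forall x y, 0 <= x < 1 -> 0 <= y < 1 -> x <> y -> cd x y + cd y x = 1.
Proof.
  intros x y Hx Hy Hn.
  assert (H1 := cd_pos x y Hx Hy Hn).
  destruct (cd_range x y). destruct (cd_range y x).
  assert (L1 : lift y (x + cd x y)) by (apply lift_step, lift_refl).
  assert (L2 : lift x (x + cd x y + cd y x)) by (apply lift_step; auto).
  destruct (lift_diff_int x x (x + cd x y + cd y x) (lift_refl x) L2) as [j Hj].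
  assert (HH : 0 < IZR j < 2) by lra.
  destruct HH as [K3 K4]. apply lt_IZR in K3. apply lt_IZR in K4.
  assert (j = 1)%Z by lia. subst j. simpl in Hj. lra.
Qed.

Lemma cd_window : forall x y X Y c, lift x X -> lift y Y -> c <= X < c + 1 -> c <= Y < c + 1 ->
  cd x y = Y - X + (if Rlt_dec Y X then 1 else 0).
Proof.
  intros x y X Y c LX LY HX HY. destruct (Rlt_dec Y X).
  - rewrite (cd_lift x y X (Y + 1)); auto. lra.
    replace (Y + 1) with (Y + IZR 1) by (simpl; lra). apply lift_add_int; auto. lra.
  - rewrite (cd_lift x y X Y); auto; lra.
Qed.

Lemma wcyc_iff : forall a b c A B C c0, lift a A -> lift b B -> lift c C ->
  c0 <= A < c0 + 1 -> c0 <= B < c0 + 1 -> c0 <= C < c0 + 1 ->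
  (wcyc a b c <-> ~ ((B < A /\ C < B) \/ (C < B /\ A < C) \/ (A < C /\ B < A))).
Proof.
  intros a b c A B C c0 LA LB LC HA HB HC. unfold wcyc.
  rewrite (cd_window a b A B c0), (cd_window b c B C c0), (cd_window c a C A c0); auto.
  destruct (Rlt_dec B A); destruct (Rlt_dec C B); destruct (Rlt_dec A C);
  split; intros; try lra; try (exfalso; apply H; lra); try (intro; lra).
Qed.

Lemma wcyc_transfer : forall a b c A B C c0 a' b' c' A' B' C' c1,
  lift a A -> lift b B -> lift c C ->
  c0 <= A < c0 + 1 -> c0 <= B < c0 + 1 -> c0 <= C < c0 + 1 ->
  lift a' A' -> lift b' B' -> lift c' C' ->
  c1 <= A' < c1 + 1 -> c1 <= B' < c1 + 1 -> c1 <= C' < c1 + 1 ->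
  (A < B <-> A' < B') -> (B < A <-> B' < A') ->
  (B < C <-> B' < C') -> (C < B <-> C' < B') ->
  (C < A <-> C' < A') -> (A < C <-> A' < C') ->
  wcyc a b c -> wcyc a' b' c'.
Proof.
  intros. rewrite (wcyc_iff a b c A B C c0) in H17; auto.
  rewrite (wcyc_iff a' b' c' A' B' C' c1); auto. tauto.
Qed.

Lemma walk_len_app : forall c m n,
  walk_len c (m + n) = walk_len c m + walk_len (fun i => c (m + i)%nat) n.
Proof.
  intros c m n. induction n as [|n IH].
  - simpl. rewrite Nat.add_0_r. lra.
  - rewrite Nat.add_succ_r. simpl. rewrite IH. rewrite Nat.add_succ_r. lra.
Qed.

Lemma walk_len_ext : forall c c' m, (forall i, (i <= m)%nat -> c i = c' i) ->
  walk_len c m = walk_len c' m.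
Proof.
  intros c c' m. induction m as [|m IH]; intros H; simpl; auto.
  rewrite IH by (intros; apply H; lia). rewrite (H m), (H (S m)) by lia. reflexivity.
Qed.

Lemma walk_len_mono : forall c m n, (m <= n)%nat -> walk_len c m <= walk_len c n.
Proof.
  intros c m n H. induction H. lra. simpl. destruct (cd_range (c m0) (c (S m0))). lra.
Qed.

Lemma walk_restrict : forall E v m n w, (n <= m)%nat -> walk E v m w -> walk E v n w.
Proof.
  intros E v m n w Hn [H0 H]. split; auto. intros i Hi. apply H. lia.
Qed.

Lemma walk_shift : forall E v m n w, walk E v (m + n) w -> walk E (w m) n (fun i => w (m + i)%nat).
Proof.
  intros E v m n w [H0 H]. split.
  - rewrite Nat.add_0_r. reflexivity.
  - intros i Hi. rewrite Nat.add_succ_r. apply H. lia.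
Qed.

Lemma walk_V : forall (V : R -> Prop) E v m w, (forall a b, E a b -> V a /\ V b) ->
  walk E v m w -> V v -> forall i, (i <= m)%nat -> V (w i).
Proof.
  intros V E v m w HE [H0 H] Hv i. induction i as [|i IH]; intros Hi.
  - rewrite H0; auto.
  - destruct (H i) as [Hq|Hq]; try lia.
    + rewrite Hq. apply IH. lia.
    + apply (HE _ _ Hq).
Qed.

Lemma walk_lift : forall w X t, lift (w 0%nat) X -> lift (w t) (X + walk_len w t).
Proof.
  intros w X t H. induction t as [|t IH].
  - simpl. rewrite Rplus_0_r. auto.
  - simpl. rewrite <- Rplus_assoc. apply lift_step. auto.
Qed.

Definition wconcat (a : nat -> R) (m : nat) (b : nat -> R) : nat -> R :=
  fun i => if (i <=? m)%nat then a i else b (i - m)%nat.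

Lemma concat_walk : forall E v m n a b, walk E v m a -> walk E (a m) n b ->
  walk E v (m + n) (wconcat a m b).
Proof.
  intros E v m n a b [Ha0 Ha] [Hb0 Hb]. split.
  - unfold wconcat. simpl. auto.
  - intros i Hi. unfold wconcat.
    destruct (Nat.leb_spec (S i) m); destruct (Nat.leb_spec i m); try lia.
    + apply Ha. lia.
    + assert (i = m) by lia. subst i. replace (S m - m)%nat with (S 0) by lia.
      rewrite <- Hb0. apply Hb. lia.
    + replace (S i - m)%nat with (S (i - m)) by lia. apply Hb. lia.
Qed.

Lemma concat_len : forall m n a b, a m = b 0%nat ->
  walk_len (wconcat a m b) (m + n) = walk_len a m + walk_len b n.
Proof.
  intros m n a b Hab. rewrite walk_len_app. f_equal.
  - apply walk_len_ext. intros i Hi. unfold wconcat.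
    destruct (Nat.leb_spec i m); try lia; auto.
  - apply walk_len_ext. intros i Hi. unfold wconcat.
    destruct (Nat.leb_spec (m + i) m).
    + assert (i = 0)%nat by lia. subst. rewrite Nat.add_0_r. auto.
    + f_equal. lia.
Qed.

Lemma exists_int_window : forall r, exists j : Z, r <= IZR j < r + 1.
Proof.
  intros r. destruct (archimed r) as [H1 H2].
  destruct (Req_dec (IZR (up r) - r) 1) as [E|E].
  - exists (up r - 1)%Z. rewrite minus_IZR. simpl. lra.
  - exists (up r). lra.
Qed.

Section Dom.
Variables (V : R -> Prop) (E : R -> R -> Prop).
Hypothesis HD : directed_graph V E.
Hypothesis HC : cyclic_graph V E.

Lemma V01 : forall x, V x -> 0 <= x < 1.
Proof. destruct HD as [H _]. exact H. Qed.

Lemma EV : forall a b, E a b -> V a /\ V b.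
Proof. destruct HD as [_ [H _]]. exact H. Qed.

Lemma concat1_len : forall a m c, a m = c 0%nat ->
  walk_len (wconcat a m c) (S m) = walk_len a m + cd (a m) (c 1%nat).
Proof.
  intros a m c H. rewrite <- Nat.add_1_r. rewrite concat_len by auto. simpl.
  rewrite H. lra.
Qed.

Lemma concat1_walk : forall v m a c, walk E v m a -> c 0%nat = a m ->
  (c 1%nat = a m \/ E (a m) (c 1%nat)) -> walk E v (S m) (wconcat a m c).
Proof.
  intros v m a c Ha H0 H1. rewrite <- Nat.add_1_r. apply concat_walk; auto.
  split; auto. intros i Hi. assert (i = 0)%nat by lia. subst. rewrite H0.
  destruct H1; [left|right]; auto.
Qed.

Lemma dom : forall m b B0 a0 A0, walk E (b 0%nat) m b -> V (b 0%nat) -> V a0 ->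
  lift (b 0%nat) B0 -> lift a0 A0 -> B0 <= A0 ->
  exists a, walk E a0 m a /\ B0 + walk_len b m <= A0 + walk_len a m.
Proof.
  intros m. induction m as [|m IH]; intros b B0 a0 A0 Hw Hb0 Ha0 LB LA Hle.
  - exists (fun _ => a0). split. split. reflexivity. intros; lia. simpl. lra.
  - destruct (IH b B0 a0 A0) as [a [Ha Hlen]]; auto.
    { eapply walk_restrict; [|exact Hw]; lia. }
    assert (LBm : lift (b m) (B0 + walk_len b m)) by (apply walk_lift; auto).
    assert (LAm : lift (a m) (A0 + walk_len a m)).
    { apply walk_lift. destruct Ha as [Ha0' _]. rewrite Ha0'. auto. }
    assert (VBm : V (b m)) by (apply (walk_V V E (b 0%nat) (S m) b EV Hw Hb0); lia).
    assert (VBm1 : V (b (S m))) by (apply (walk_V V E (b 0%nat) (S m) b EV Hw Hb0); lia).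
    assert (VAm : V (a m)) by (apply (walk_V V E a0 m a EV Ha Ha0); lia).
    assert (Hc := cd_range (b m) (b (S m))).
    destruct (Rle_dec (B0 + walk_len b m + cd (b m) (b (S m))) (A0 + walk_len a m)) as [Hst|Hmv].
    +
      exists (wconcat a m (fun _ => a m)). split.
      * apply concat1_walk; auto.
      * rewrite concat1_len by auto. rewrite cd_self. simpl. lra.
    +
      assert (Eb : E (b m) (b (S m))).
      { destruct Hw as [_ Hw]. destruct (Hw m) as [Q|Q]; try lia; auto.
        exfalso. rewrite Q in Hmv. rewrite cd_self in Hmv. lra. }
      assert (Ea : E (a m) (b (S m))).
      { destruct (Req_dec (A0 + walk_len a m) (B0 + walk_len b m)) as [Eq|Neq].
        - assert (a m = b m).
          { apply (lift_same _ _ (A0 + walk_len a m)); auto using V01. rewrite Eq; auto. }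
          rewrite H; auto.
        - assert (Hcd : cd (b m) (a m) = (A0 + walk_len a m) - (B0 + walk_len b m)).
          { apply cd_lift; auto. lra. }
          destruct (HC (b m) (b (S m)) Eb (a m) VAm) as [_ H2]; auto. lra. }
      exists (wconcat a m (fun i => match i with O => a m | _ => b (S m) end)). split.
      * apply concat1_walk; auto.
      * rewrite concat1_len by auto.
        assert (Hcd2 : cd (a m) (b (S m)) = (B0 + walk_len b m + cd (b m) (b (S m))) - (A0 + walk_len a m)).
        { apply cd_lift; auto. apply lift_step; auto. lra. }
        rewrite Hcd2. simpl. lra.
Qed.
End Dom.

Section UB.
Variables (V : R -> Prop) (E : R -> R -> Prop).
Hypothesis HD : directed_graph V E.
Hypothesis HC : cyclic_graph V E.
Variables (v : R) (l : nat) (z : Z).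
Hypothesis Hv : V v.
Hypothesis Hopt : forall w, walk E v l w -> walk_len w l <= IZR z.

Lemma UB : forall N b B0 M, walk E (b 0%nat) (N * l) b -> V (b 0%nat) -> lift (b 0%nat) B0 ->
  B0 <= v + IZR M -> B0 + walk_len b (N * l) <= v + IZR M + INR N * IZR z.
Proof.
  intros N. induction N as [|N IH]; intros b B0 M Hw Hb LB Hle.
  - simpl. lra.
  - destruct (exists_int_window (B0 - v)) as [M' HM'].
    assert (HMM : (M' <= M)%Z).
    { assert (IZR M' < IZR M + 1) by lra.
      rewrite <- (plus_IZR M 1) in H. apply lt_IZR in H. lia. }
    destruct (dom V E HD HC l b B0 v (v + IZR M')) as [a [Ha Hlen]]; auto.
    { eapply walk_restrict; [|exact Hw]. simpl. lia. }
    { apply lift_add_int, lift_refl. }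
    { lra. }
    assert (Hal := Hopt a Ha).
    assert (HMr : IZR M' <= IZR M) by (apply IZR_le; auto).
    replace (S N * l)%nat with (l + N * l)%nat by (simpl; lia).
    rewrite walk_len_app.
    assert (Hsh := walk_shift E (b 0%nat) l (N * l) b).
    replace (l + N * l)%nat with (S N * l)%nat in Hsh by (simpl; lia).
    specialize (Hsh Hw).
    assert (IH' := IH (fun i => b (l + i)%nat) (B0 + walk_len b l) (M + z)%Z).
    simpl in IH'. rewrite Nat.add_0_r in IH'.
    assert (VBl : V (b l)).
    { apply (walk_V V E (b 0%nat) (S N * l) b (EV V E HD) Hw Hb). simpl. lia. }
    specialize (IH' Hsh VBl (walk_lift b B0 l LB)).
    rewrite plus_IZR in IH'. rewrite S_INR. 
    assert (B0 + walk_len b l <= v + (IZR M + IZR z)) by lra.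
    specialize (IH' H). lra.
Qed.
End UB.

Fixpoint sumR (F : nat -> R) (n : nat) : R :=
  match n with O => 0 | S m => sumR F m + F m end.

Lemma sumR_add : forall F a b, sumR F (a + b) = sumR F a + sumR (fun t => F (a + t)%nat) b.
Proof.
  intros F a b. induction b as [|b IH]; simpl.
  - rewrite Nat.add_0_r. lra.
  - rewrite Nat.add_succ_r. simpl. rewrite IH. lra.
Qed.

Lemma sumR_front : forall F s, sumR F (S s) = F 0%nat + sumR (fun t => F (S t)) s.
Proof.
  intros F s. replace (S s) with (1 + s)%nat by lia. rewrite sumR_add. simpl. lra.
Qed.

Lemma sumR_ext : forall F G n, (forall i, (i < n)%nat -> F i = G i) -> sumR F n = sumR G n.
Proof.
  intros F G n H. induction n; simpl; auto. rewrite IHn by (intros; apply H; lia).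
  rewrite H by lia. auto.
Qed.

Lemma sumR_le : forall F G n, (forall i, (i < n)%nat -> F i <= G i) -> sumR F n <= sumR G n.
Proof.
  intros F G n H. induction n; simpl. lra. assert (F n <= G n) by (apply H; lia).
  assert (sumR F n <= sumR G n) by (apply IHn; intros; apply H; lia). lra.
Qed.

Lemma walk_len_sum : forall w m, walk_len w m = sumR (fun i => cd (w i) (w (S i))) m.
Proof. intros w m. induction m; simpl; auto. rewrite IHm. auto. Qed.

Lemma sumR_cd_int : forall F m, exists J, sumR (fun u => cd (F u) (F (S u))) m = F m - F 0%nat + IZR J.
Proof.
  intros F m. induction m as [|m [J HJ]]; simpl.
  - exists 0%Z. simpl. lra.
  - destruct (cd_int (F m) (F (S m))) as [j Hj]. exists (J + j)%Z. rewrite plus_IZR. lra.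
Qed.

Lemma INR_div_lt : forall x y n, (0 < n)%nat -> (INR x / INR n < INR y / INR n <-> (x < y)%nat).
Proof.
  intros x y n Hn. assert (0 < INR n) by (apply lt_0_INR; lia). split; intros H1.
  - apply INR_lt. apply Rmult_lt_reg_r with (/ INR n). apply Rinv_0_lt_compat; auto. exact H1.
  - apply Rmult_lt_compat_r. apply Rinv_0_lt_compat; auto. apply lt_INR; auto.
Qed.

Lemma INR_div_range : forall x n, (x < n)%nat -> 0 <= INR x / INR n < 1.
Proof.
  intros x n H. assert (0 < INR n) by (apply lt_0_INR; lia).
  assert (INR x < INR n) by (apply lt_INR; auto). assert (0 <= INR x) by apply pos_INR.
  split. apply Rmult_le_pos; auto. left. apply Rinv_0_lt_compat; auto.
  apply Rmult_lt_reg_r with (INR n); auto. unfold Rdiv. rewrite Rmult_assoc, Rinv_l by lra. lra.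
Qed.

Lemma mod_2n : forall x n, (n <= x)%nat -> (x < 2 * n)%nat -> x mod n = (x - n)%nat.
Proof.
  intros x n H1 H2. symmetry. apply Nat.mod_unique with 1%nat; lia.
Qed.

Lemma wcyc_index : forall n i p q, (i < n)%nat -> (p <= q)%nat -> (q < n)%nat ->
  wcyc (INR i / INR n) (INR ((i + p) mod n) / INR n) (INR ((i + q) mod n) / INR n).
Proof.
  intros n i p q Hi Hpq Hq.
  assert (Hn : (0 < n)%nat) by lia.
  assert (Rp : ((i + p) mod n < n)%nat) by (apply Nat.mod_upper_bound; lia).
  assert (Rq : ((i + q) mod n < n)%nat) by (apply Nat.mod_upper_bound; lia).
  rewrite (wcyc_iff _ _ _ (INR i / INR n) (INR ((i + p) mod n) / INR n) (INR ((i + q) mod n) / INR n) 0);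
    try apply lift_refl; try (rewrite Rplus_0_l; apply INR_div_range; auto).
  rewrite !INR_div_lt by auto.
  destruct (Nat.lt_ge_cases (i + q) n).
  - rewrite (Nat.mod_small (i + p)), (Nat.mod_small (i+q)) by lia. lia.
  - rewrite (mod_2n (i + q)) by lia.
    destruct (Nat.lt_ge_cases (i + p) n).
    + rewrite (Nat.mod_small (i + p)) by lia. lia.
    + rewrite (mod_2n (i + p)) by lia. lia.
Qed.

Section HomWalk.
Variables (V : R -> Prop) (E : R -> R -> Prop).
Hypothesis HD : directed_graph V E.
Variables (W : list R) (n k : nat) (f : nat -> R).
Hypothesis HW : forall y, In y W -> V y.
Hypothesis Hhom : cyclic_hom E W n k f.
Hypothesis Hk : (1 <= k)%nat.
Hypothesis Hn : (2 * k < n)%nat.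

Lemma f01 : forall i, (i < n)%nat -> 0 <= f i < 1.
Proof.
  intros i Hi. apply (V01 V E HD). apply HW. destruct Hhom as [H _]. apply H; auto.
Qed.

Lemma f_edge : forall i s, (i < n)%nat -> (1 <= s <= k)%nat -> E (f i) (f ((i + s) mod n)).
Proof. intros i s Hi Hs. destruct Hhom as [_ [He _]]. apply He; auto. Qed.

Lemma f_neq : forall i s, (i < n)%nat -> (1 <= s <= k)%nat -> f i <> f ((i + s) mod n).
Proof.
  intros i s Hi Hs Heq. destruct HD as [_ [_ [Hl _]]]. apply (Hl (f i)).
  rewrite Heq at 2. apply f_edge; auto.
Qed.

Definition aa (u : nat) : R := cd (f u) (f ((u + 1) mod n)).

Lemma arc : forall s, (s <= k)%nat -> forall i, (i < n)%nat ->
  sumR (fun t => aa ((i + t) mod n)) s <= cd (f i) (f ((i + s) mod n)).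
Proof.
  intros s. induction s as [|s IH]; intros Hs i Hi.
  - simpl. apply cd_range.
  - rewrite sumR_front. rewrite Nat.add_0_r, Nat.mod_small by auto.
    assert (Hi1 : ((i + 1) mod n < n)%nat) by (apply Nat.mod_upper_bound; lia).
    specialize (IH ltac:(lia) ((i+1) mod n) Hi1).
    rewrite Nat.Div0.add_mod_idemp_l in IH.
    assert (Hs' : sumR (fun t => aa (((i + 1) mod n + t) mod n)) s =
                  sumR (fun t => aa ((i + S t) mod n)) s).
    { apply sumR_ext. intros t Ht. rewrite Nat.Div0.add_mod_idemp_l. f_equal. f_equal. lia. }
    rewrite Hs' in IH.
    destruct Hhom as [_ [_ [Hord _]]].
    assert (Hw := Hord i ((i + 1) mod n) ((i + S s) mod n) Hi Hi1
                 ltac:(apply Nat.mod_upper_bound; lia) (wcyc_index n i 1 (S s) Hi ltac:(lia) ltac:(lia))).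
    unfold wcyc in Hw.
    assert (Hne := f_neq i (S s) Hi ltac:(lia)).
    assert (Han := cd_anti (f i) (f ((i + S s) mod n)) (f01 i Hi)
                    (f01 _ ltac:(apply Nat.mod_upper_bound; lia)) Hne).
    replace (i + 1 + s)%nat with (i + S s)%nat in IH by lia.
    unfold aa at 1. lra.
Qed.

Lemma aa_pos : forall u, (u < n)%nat -> 0 < aa u.
Proof.
  intros u Hu. unfold aa. apply cd_pos. apply f01; auto.
  apply f01. apply Nat.mod_upper_bound; lia. apply f_neq; auto; lia.
Qed.

Lemma sum_aa_ge1 : 1 <= sumR aa n.
Proof.
  destruct (sumR_cd_int (fun u => f (u mod n)) n) as [J HJ].
  assert (Heq : sumR aa n = sumR (fun u => cd (f (u mod n)) (f (S u mod n))) n).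
  { apply sumR_ext. intros i Hi. unfold aa. rewrite (Nat.mod_small i n Hi).
    replace (i + 1)%nat with (S i) by lia. auto. }
  rewrite Heq, HJ. rewrite Nat.Div0.mod_same, Nat.Div0.mod_0_l.
  assert (Hpos : 0 < sumR aa n).
  { clear Heq HJ. assert (forall m, (m <= n)%nat -> (0 < m)%nat -> 0 < sumR aa m).
    { intros m. induction m; intros Hm Hm0. lia. simpl.
      assert (0 < aa m) by (apply aa_pos; lia).
      destruct m. simpl. lra. assert (0 < sumR aa (S m)) by (apply IHm; lia). lra. }
    apply H; lia. }
  rewrite Heq, HJ in Hpos. rewrite Nat.Div0.mod_same, Nat.Div0.mod_0_l in Hpos.
  assert (0 < IZR J) by lra. apply lt_IZR in H. assert (1 <= J)%Z by lia. apply IZR_le in H0. simpl in H0. lra.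
Qed.

Lemma sum_periodic : forall m, sumR (fun u => aa (u mod n)) (m * n) = INR m * sumR aa n.
Proof.
  intros m. induction m as [|m IH].
  - simpl. lra.
  - replace (S m * n)%nat with (n + m * n)%nat by (simpl; lia).
    rewrite sumR_add. rewrite S_INR.
    rewrite (sumR_ext (fun u => aa (u mod n)) aa) by (intros; rewrite Nat.mod_small; auto).
    rewrite (sumR_ext (fun t => aa ((n + t) mod n)) (fun u => aa (u mod n))).
    + rewrite IH. lra.
    + intros i Hi. f_equal. replace (n + i)%nat with (i + 1 * n)%nat by lia.
      apply Nat.Div0.mod_add.
Qed.

Lemma sum_blocks : forall N, sumR (fun i => sumR (fun t => aa ((i * k + t) mod n)) k) N =
  sumR (fun u => aa (u mod n)) (N * k).
Proof.
  intros N. induction N as [|N IH]; simpl; auto.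
  replace (k + N * k)%nat with (N * k + k)%nat by lia. rewrite sumR_add. rewrite IH. auto.
Qed.

Definition hwalk (i : nat) : R := f ((i * k) mod n).

Lemma hwalk_walk : forall N, walk E (f 0%nat) N hwalk.
Proof.
  intros N. split.
  - unfold hwalk. simpl. rewrite Nat.Div0.mod_0_l. auto.
  - intros i Hi. right. unfold hwalk.
    replace ((S i * k) mod n)%nat with (((i * k) mod n + k) mod n)%nat.
    + apply f_edge. apply Nat.mod_upper_bound; lia. lia.
    + rewrite Nat.Div0.add_mod_idemp_l. f_equal. simpl. lia.
Qed.

Lemma hwalk_len : forall N, INR (N * k) <= walk_len hwalk (N * n).
Proof.
  intros N. rewrite walk_len_sum.
  apply Rle_trans with (sumR (fun i => sumR (fun t => aa ((i * k + t) mod n)) k) (N * n)).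
  - rewrite sum_blocks. replace (N * n * k)%nat with ((N * k) * n)%nat by lia.
    rewrite sum_periodic. assert (H := sum_aa_ge1). assert (0 <= INR (N * k)) by apply pos_INR.
    nra.
  - apply sumR_le. intros i Hi. unfold hwalk.
    assert (Hm : ((i * k) mod n < n)%nat) by (apply Nat.mod_upper_bound; lia).
    replace ((S i * k) mod n)%nat with (((i * k) mod n + k) mod n)%nat
      by (rewrite Nat.Div0.add_mod_idemp_l; f_equal; simpl; lia).
    eapply Rle_trans; [|apply (arc k (le_n k) _ Hm)].
    right. apply sumR_ext. intros t Ht. f_equal. rewrite Nat.Div0.add_mod_idemp_l. auto.
Qed.
End HomWalk.

Lemma hom_bound : forall (V : R -> Prop) (E : R -> R -> Prop),
  directed_graph V E -> cyclic_graph V E -> forall v l z, V v ->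
  (forall w, walk E v l w -> walk_len w l <= IZR z) ->
  forall W n k f, (forall y, In y W -> V y) -> cyclic_hom E W n k f -> (1 <= k)%nat -> (2 * k < n)%nat ->
  (Z.of_nat (l * k) <= Z.of_nat n * z)%Z.
Proof.
  intros V E HD HC v l z Hv Hopt W n k f HW Hhom Hk Hn.
  assert (Hw := hwalk_walk E W n k f Hhom Hk Hn (l * n)).
  assert (Hlen := hwalk_len V E HD W n k f HW Hhom Hk Hn l).
  assert (H0 : hwalk n k f 0%nat = f 0%nat) by (unfold hwalk; simpl; rewrite Nat.Div0.mod_0_l; auto).
  assert (Vf0 : V (f 0%nat)) by (apply HW; destruct Hhom as [Hi _]; apply Hi; lia).
  destruct (exists_int_window (f 0%nat - v)) as [M' HM'].
  rewrite <- H0 in Hw.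
  destruct (dom V E HD HC (l * n) (hwalk n k f) (f 0%nat) v (v + IZR M') Hw) as [a [Ha Hd]].
  - rewrite H0; auto.
  - auto.
  - rewrite H0; apply lift_refl.
  - apply lift_add_int, lift_refl.
  - lra.
  - assert (Hub := UB V E HD HC v l z Hv Hopt n a v 0%Z).
    destruct Ha as [Ha0 Ha'].
    replace (n * l)%nat with (l * n)%nat in Hub by lia.
    assert (Hub' : v + walk_len a (l * n) <= v + IZR 0 + INR n * IZR z).
    { apply Hub; rewrite ?Ha0.
      - split; auto.
      - auto.
      - apply lift_refl.
      - simpl; lra. }
    simpl in Hub'.
    assert (Hlt : INR (l * k) < 1 + INR n * IZR z) by lra.
    rewrite !INR_IZR_INZ in Hlt. rewrite <- mult_IZR in Hlt.
    replace 1 with (IZR 1) in Hlt by auto. rewrite <- plus_IZR in Hlt.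
    apply lt_IZR in Hlt. lia.
Qed.

Lemma greedy_ex : forall (E : R -> R -> Prop) (L : list R) x, exists y,
  (y = x \/ (E x y /\ In y L)) /\ (forall y', In y' L -> E x y' -> cd x y' <= cd x y).
Proof.
  intros E L x. induction L as [|a L [y [Hy Hm]]].
  - exists x. split; auto. intros y' H. destruct H.
  - destruct (classic (E x a /\ cd x y < cd x a)) as [[Ha Hlt]|Hn].
    + exists a. split. right. split; simpl; auto.
      intros y1 Hin He. destruct Hin as [Q|Hin]. subst y1. lra. specialize (Hm y1 Hin He). lra.
    + exists y. split. destruct Hy as [Hy|[Hy1 Hy2]]; [left|right]; simpl; auto.
      intros y1 Hin He. destruct Hin as [Q|Hin]; auto. subst y1. destruct (Rle_dec (cd x a) (cd x y)); auto.
      exfalso. apply Hn. split; auto. lra.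
Qed.

Section Greedy.
Variables (V : R -> Prop) (E : R -> R -> Prop).
Hypothesis HD : directed_graph V E.
Hypothesis HC : cyclic_graph V E.
Variables (v : R) (l : nat) (z : Z) (w0 : nat -> R).
Hypothesis Hv : V v.
Hypothesis Hw0 : walk E v l w0.
Hypothesis Hw0len : walk_len w0 l = IZR z.
Hypothesis Hopt : forall w, walk E v l w -> walk_len w l <= IZR z.
Hypothesis Hmin : forall i, periodic_at E v i -> (l <= i)%nat.
Hypothesis Hz : (1 <= z)%Z.
Hypothesis Hl : (1 <= l)%nat.

Definition OL : list R := map w0 (seq 0 (S l)).

Definition F (x : R) : R := proj1_sig (constructive_indefinite_description _ (greedy_ex E OL x)).

Lemma F_spec : forall x, (F x = x \/ (E x (F x) /\ In (F x) OL)) /\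
  (forall y', In y' OL -> E x y' -> cd x y' <= cd x (F x)).
Proof. intros x. unfold F. destruct (constructive_indefinite_description _ _). simpl. auto. Qed.

Lemma O_V : forall y, In y OL -> V y.
Proof.
  intros y H. unfold OL in H. apply in_map_iff in H. destruct H as [t [<- Ht]].
  apply in_seq in Ht. apply (walk_V V E v l w0 (EV V E HD) Hw0 Hv). lia.
Qed.

Lemma w0_O : forall t, (t <= l)%nat -> In (w0 t) OL.
Proof. intros t Ht. unfold OL. apply in_map. apply in_seq. lia. Qed.

Lemma v_O : In v OL.
Proof. destruct Hw0 as [H0 _]. rewrite <- H0. apply w0_O. lia. Qed.

Lemma F_O : forall x, In x OL -> In (F x) OL.
Proof. intros x Hx. destruct (F_spec x) as [[H|[_ H]] _]; auto. rewrite H; auto. Qed.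

Fixpoint gg (n : nat) : R := match n with O => v | S m => F (gg m) end.

Lemma gg_O : forall t, In (gg t) OL.
Proof. induction t; simpl. apply v_O. apply F_O; auto. Qed.

Lemma gg_V : forall t, V (gg t).
Proof. intros. apply O_V, gg_O. Qed.

Lemma gg01 : forall t, 0 <= gg t < 1.
Proof. intros. apply (V01 V E HD), gg_V. Qed.

Lemma gg_walk : forall m, walk E v m gg.
Proof.
  intros m. split; auto. intros i _. simpl. destruct (F_spec (gg i)) as [[H|[H _]] _].
  left; auto. right; auto.
Qed.

Definition U (t : nat) : R := v + walk_len gg t.

Lemma U_lift : forall t, lift (gg t) (U t).
Proof. intros t. unfold U. apply walk_lift. apply lift_refl. Qed.

Lemma gg_dom : forall t, (t <= l)%nat -> v + walk_len w0 t <= U t.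
Proof.
  intros t. unfold U. induction t as [|t IH]; intros Ht.
  - simpl. lra.
  - specialize (IH ltac:(lia)). simpl.
    assert (Lw : lift (w0 t) (v + walk_len w0 t)).
    { apply walk_lift. destruct Hw0 as [H0 _]. rewrite H0. apply lift_refl. }
    assert (Lg := U_lift t). unfold U in Lg.
    assert (Vw : V (w0 t)) by (apply (walk_V V E v l w0 (EV V E HD) Hw0 Hv); lia).
    assert (Vw1 : V (w0 (S t))) by (apply (walk_V V E v l w0 (EV V E HD) Hw0 Hv); lia).
    assert (Hc := cd_range (w0 t) (w0 (S t))).
    assert (Hc' := cd_range (gg t) (F (gg t))).
    destruct (Rle_dec (v + walk_len w0 t + cd (w0 t) (w0 (S t))) (v + walk_len gg t)) as [Hle|Hgt].
    + lra.
    + assert (Ew : E (w0 t) (w0 (S t))).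
      { destruct Hw0 as [_ Hs]. destruct (Hs t) as [Q|Q]; try lia; auto.
        exfalso. rewrite Q, cd_self in Hgt. lra. }
      assert (Eg : E (gg t) (w0 (S t))).
      { destruct (Req_dec (v + walk_len w0 t) (v + walk_len gg t)) as [Eq|Neq].
        - assert (gg t = w0 t).
          { apply (lift_same _ _ (v + walk_len gg t)); auto using gg01. apply (V01 V E HD); auto.
            rewrite <- Eq; auto. }
          rewrite H; auto.
        - assert (Hcd : cd (w0 t) (gg t) = (v + walk_len gg t) - (v + walk_len w0 t)).
          { apply cd_lift; auto. lra. }
          destruct (HC (w0 t) (w0 (S t)) Ew (gg t) (gg_V t)) as [_ H2]; auto. lra. }
      destruct (F_spec (gg t)) as [_ Hmax].
      specialize (Hmax (w0 (S t)) (w0_O (S t) Ht) Eg).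
      assert (Hcd2 : cd (gg t) (w0 (S t)) = (v + walk_len w0 t + cd (w0 t) (w0 (S t))) - (v + walk_len gg t)).
      { apply cd_lift; auto. apply lift_step; auto. lra. }
      lra.
Qed.

Lemma gg_len : walk_len gg l = IZR z.
Proof.
  assert (H1 := gg_dom l (le_n l)). unfold U in H1.
  assert (H2 := Hopt gg (gg_walk l)). lra.
Qed.

Lemma gg_l : gg l = v.
Proof.
  apply (lift_same _ _ (U l)); auto using gg01. apply (V01 V E HD); auto.
  apply U_lift. unfold U. rewrite gg_len. apply lift_add_int, lift_refl.
Qed.

Lemma gg_shift : forall a b i, gg a = gg b -> gg (a + i) = gg (b + i).
Proof.
  intros a b i H. induction i. rewrite !Nat.add_0_r; auto.
  rewrite !Nat.add_succ_r. simpl. rewrite IHi. auto.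
Qed.

Lemma gg_per : forall i, gg (l + i) = gg i.
Proof. intros i. apply (gg_shift l 0 i). rewrite gg_l. auto. Qed.

Lemma gg_perm : forall c i, gg (i + c * l) = gg i.
Proof.
  intros c. induction c; intros i. rewrite Nat.add_0_r; auto.
  replace (i + S c * l)%nat with (l + (i + c * l))%nat by (simpl; lia).
  rewrite gg_per. auto.
Qed.

Lemma gg_mod : forall i, gg i = gg (i mod l).
Proof.
  intros i. rewrite (Nat.div_mod_eq i l) at 1.
  replace (l * (i / l) + i mod l)%nat with (i mod l + (i / l) * l)%nat by lia.
  apply gg_perm.
Qed.

Lemma walk_len_shift_gg : forall a i, gg a = v -> walk_len gg (a + i) = walk_len gg a + walk_len gg i.
Proof.
  intros a i Ha. rewrite walk_len_app. f_equal. apply walk_len_ext.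
  intros j _. replace (gg j) with (gg (0 + j)) by auto. apply gg_shift. rewrite Ha. auto.
Qed.

Lemma gg_distinct : forall s t, (s < t)%nat -> (t < l)%nat -> gg s <> gg t.
Proof.
  intros s t Hst Htl Heq.
  set (d := (l - (t - s))%nat).
  assert (Hd : gg d = v).
  { assert (H := gg_shift s t (l - t) Heq). replace (t + (l - t))%nat with l in H by lia.
    rewrite gg_l in H. replace d with (s + (l - t))%nat by (unfold d; lia). auto. }
  assert (Hld : gg (l - d) = v).
  { assert (H := gg_shift d 0 (l - d)). simpl in H. rewrite Hd in H. specialize (H eq_refl).
    replace (d + (l - d))%nat with l in H by (unfold d; lia). rewrite gg_l in H. auto. }
  assert (Hsplit : walk_len gg l = walk_len gg (l - d) + walk_len gg d).
  { replace l with ((l - d) + d)%nat at 1 by (unfold d; lia). apply walk_len_shift_gg; auto. }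
  assert (Hper : periodic_at E v d).
  { split. unfold d; lia.
    exists (walk_len gg d). split; [split|split].
    - intros x [a [Ha ->]].
      assert (Hc := concat_walk E v (l - d) d gg a (gg_walk (l - d))).
      rewrite Hld in Hc. specialize (Hc Ha).
      assert (Heql : (l - d + d)%nat = l) by (unfold d; lia).
      assert (Hcl : walk_len (wconcat gg (l - d) a) (l - d + d) <= IZR z).
      { rewrite Heql. apply Hopt. rewrite Heql in Hc. exact Hc. }
      rewrite concat_len in Hcl. rewrite gg_len in Hsplit. lra.
      destruct Ha as [Ha0 _]. rewrite Ha0. auto.
    - intros b Hb. apply Hb. exists gg. split; auto. apply gg_walk.
    - assert (L := U_lift d). rewrite Hd in L. unfold U in L.
      destruct (lift_diff_int v v (v + walk_len gg d) (lift_refl v) L) as [j Hj].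
      exists j. lra.
    - exists gg. split; auto. apply gg_walk. }
  apply Hmin in Hper. unfold d in Hper. lia.
Qed.

Lemma gg_eq_mod : forall a b, gg a = gg b -> a mod l = b mod l.
Proof.
  intros a b H. rewrite (gg_mod a), (gg_mod b) in H.
  assert (Ha : (a mod l < l)%nat) by (apply Nat.mod_upper_bound; lia).
  assert (Hb : (b mod l < l)%nat) by (apply Nat.mod_upper_bound; lia).
  destruct (Nat.lt_trichotomy (a mod l) (b mod l)) as [Hlt|[Heq|Hgt]]; auto.
  - exfalso. apply (gg_distinct _ _ Hlt Hb H).
  - exfalso. apply (gg_distinct _ _ Hgt Ha). auto.
Qed.

Lemma l_ge2 : (2 <= l)%nat.
Proof.
  destruct (Nat.eq_dec l 1) as [E1|]; try lia.
  exfalso. assert (H := gg_len). rewrite E1 in H. simpl in H.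
  assert (Hc := cd_range v (F v)). apply IZR_le in Hz. lra.
Qed.

Lemma gg_step_neq : forall s, gg (S s) <> gg s.
Proof.
  intros s H. apply gg_eq_mod in H. assert (H2 := l_ge2).
  rewrite <- Nat.add_1_r in H. rewrite <- Nat.Div0.add_mod_idemp_l in H.
  assert (Hs : (s mod l < l)%nat) by (apply Nat.mod_upper_bound; lia).
  destruct (Nat.eq_dec (s mod l + 1) l) as [Q|Q].
  - rewrite Q, Nat.Div0.mod_same in H. lia.
  - rewrite Nat.mod_small in H by lia. lia.
Qed.

Lemma gg_edge : forall s, E (gg s) (gg (S s)).
Proof.
  intros s. simpl. destruct (F_spec (gg s)) as [[H|[H _]] _]; auto.
  exfalso. apply (gg_step_neq s). simpl. auto.
Qed.

Lemma U_step : forall s, U (S s) = U s + cd (gg s) (gg (S s)) /\ 0 < cd (gg s) (gg (S s)) < 1.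
Proof.
  intros s. split. unfold U. simpl. lra.
  split. apply cd_pos; auto using gg01. intro H. apply (gg_step_neq s). auto.
  apply cd_range.
Qed.

Lemma U_per : forall t, U (l + t) = U t + IZR z.
Proof. intros t. unfold U. rewrite walk_len_shift_gg by apply gg_l. rewrite gg_len. lra. Qed.

Lemma U_perm : forall c t, U (t + c * l) = U t + INR c * IZR z.
Proof.
  intros c. induction c; intros t. simpl. rewrite Nat.add_0_r. lra.
  replace (t + S c * l)%nat with (l + (t + c * l))%nat by (simpl; lia).
  rewrite U_per, IHc, S_INR. lra.
Qed.

Lemma Mono : forall s t j, U s + IZR j < U t -> U (S s) + IZR j < U (S t).
Proof.
  intros s t j H.
  destruct (U_step s) as [Us [c0 c1]]. destruct (U_step t) as [Ut [d0 d1]].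
  rewrite Us, Ut.
  set (X := U s + IZR j). set (Y := U t). fold X Y in H.
  assert (LX : lift (gg s) X) by (apply lift_add_int, U_lift).
  assert (LY : lift (gg t) Y) by (apply U_lift).
  destruct (Rle_dec (X + 1) Y) as [Hfar|Hnear]. { unfold X in *. lra. }
  destruct (Rlt_dec Y (X + cd (gg s) (gg (S s)))) as [Hin|Hout].
  2:{ unfold X, Y in *. lra. }
  assert (Hcd : cd (gg s) (gg t) = Y - X) by (apply cd_lift; auto; lra).
  destruct (HC (gg s) (gg (S s)) (gg_edge s) (gg t) (gg_V t)) as [_ Et]. lra.
  destruct (F_spec (gg t)) as [_ Hmax].
  specialize (Hmax (gg (S s)) (gg_O (S s)) Et).
  assert (LS : lift (gg (S s)) (X + cd (gg s) (gg (S s)))) by (apply lift_step; auto).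
  assert (Hcd2 : cd (gg t) (gg (S s)) = X + cd (gg s) (gg (S s)) - Y) by (apply cd_lift; auto; lra).
  assert (Hmax' : cd (gg t) (gg (S s)) <= cd (gg t) (gg (S t))) by exact Hmax.
  destruct (Rle_lt_or_eq_dec _ _ Hmax') as [Hs|Heq].
  - unfold X, Y in *. lra.
  - exfalso.
    assert (LT : lift (gg (S t)) (Y + cd (gg t) (gg (S t)))) by (apply lift_step; auto).
    assert (Hg : gg (S s) = gg (S t)).
    { apply (lift_same _ _ (Y + cd (gg t) (gg (S t)))); auto using gg01.
      replace (Y + cd (gg t) (gg (S t))) with (X + cd (gg s) (gg (S s))) by lra. auto. }
    assert (Hg2 : gg s = gg t).
    { rewrite <- (gg_per s), <- (gg_per t).
      replace (l + s)%nat with (S s + (l - 1))%nat by lia.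
      replace (l + t)%nat with (S t + (l - 1))%nat by lia.
      apply gg_shift; auto. }
    rewrite Hg2 in LX. destruct (lift_diff_int _ _ _ LX LY) as [i Hi].
    assert (i = 0)%Z by (apply int_small; lra). subst i. simpl in Hi. lra.
Qed.

Lemma MonoEq : forall s t j, U s + IZR j = U t -> U (S s) + IZR j = U (S t).
Proof.
  intros s t j H.
  assert (Hg : gg s = gg t).
  { apply (lift_same _ _ (U t)); auto using gg01. rewrite <- H. apply lift_add_int, U_lift. apply U_lift. }
  destruct (U_step s) as [Us _]. destruct (U_step t) as [Ut _].
  rewrite Us, Ut. simpl. rewrite Hg. lra.
Qed.

Lemma Iter : forall r s t j, U s + IZR j < U t -> U (s + r) + IZR j < U (t + r).
Proof.
  intros r. induction r; intros s t j H. rewrite !Nat.add_0_r; auto.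
  rewrite !Nat.add_succ_r. apply Mono. auto.
Qed.

Lemma IterEq : forall r s t j, U s + IZR j = U t -> U (s + r) + IZR j = U (t + r).
Proof.
  intros r. induction r; intros s t j H. rewrite !Nat.add_0_r; auto.
  rewrite !Nat.add_succ_r. apply MonoEq. auto.
Qed.

Definition NN (s : nat) (j : Z) : Z := (Z.of_nat s * z + j * Z.of_nat l)%Z.

Lemma core_lt : forall s t j, U s + IZR j < U t -> (Z.of_nat s * z + j * Z.of_nat l < Z.of_nat t * z)%Z.
Proof.
  intros s t j H.
  set (t' := (t + s * l)%nat). set (d := (t' - s)%nat). set (k0 := (j + Z.of_nat s * z)%Z).
  assert (Ht' : U t' = U t + INR s * IZR z) by (apply U_perm).
  assert (H1 : U s + IZR k0 < U (s + d)).
  { replace (s + d)%nat with t' by (unfold d, t'; nia). unfold k0. rewrite plus_IZR, mult_IZR.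
    rewrite <- INR_IZR_INZ. lra. }
  assert (Hi : forall i, (1 <= i)%nat -> U s + IZR (Z.of_nat i * k0) < U (s + i * d)).
  { intros i Hi. induction i. lia. destruct i.
    { replace (Z.of_nat 1 * k0)%Z with k0 by lia. replace (s + 1 * d)%nat with (s + d)%nat by lia.
      exact H1. }
    specialize (IHi ltac:(lia)).
    assert (H2 := Iter d s (s + S i * d) (Z.of_nat (S i) * k0) IHi).
    replace (s + S i * d + d)%nat with (s + S (S i) * d)%nat in H2 by (simpl; lia).
    replace (Z.of_nat (S (S i)) * k0)%Z with (k0 + Z.of_nat (S i) * k0)%Z by lia.
    rewrite plus_IZR.
    assert (U s + IZR k0 + IZR (Z.of_nat (S i) * k0) < U (s + d) + IZR (Z.of_nat (S i) * k0)) by lra.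
    lra. }
  specialize (Hi l Hl).
  replace (s + l * d)%nat with (s + d * l)%nat in Hi by lia.
  rewrite U_perm in Hi.
  assert (Hz2 : IZR (Z.of_nat l * k0) < INR d * IZR z) by lra.
  rewrite INR_IZR_INZ, <- mult_IZR in Hz2. apply lt_IZR in Hz2.
  unfold k0, d, t' in Hz2. rewrite Nat2Z.inj_sub in Hz2 by nia.
  rewrite Nat2Z.inj_add, Nat2Z.inj_mul in Hz2. nia.
Qed.

Lemma core_eq : forall s t j, U s + IZR j = U t -> (Z.of_nat s * z + j * Z.of_nat l = Z.of_nat t * z)%Z.
Proof.
  intros s t j H.
  set (t' := (t + s * l)%nat). set (d := (t' - s)%nat). set (k0 := (j + Z.of_nat s * z)%Z).
  assert (Ht' : U t' = U t + INR s * IZR z) by (apply U_perm).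
  assert (H1 : U s + IZR k0 = U (s + d)).
  { replace (s + d)%nat with t' by (unfold d, t'; nia). unfold k0. rewrite plus_IZR, mult_IZR.
    rewrite <- INR_IZR_INZ. lra. }
  assert (Hi : forall i, (1 <= i)%nat -> U s + IZR (Z.of_nat i * k0) = U (s + i * d)).
  { intros i Hi. induction i. lia. destruct i.
    { replace (Z.of_nat 1 * k0)%Z with k0 by lia. replace (s + 1 * d)%nat with (s + d)%nat by lia.
      exact H1. }
    specialize (IHi ltac:(lia)).
    assert (H2 := IterEq d s (s + S i * d) (Z.of_nat (S i) * k0) IHi).
    replace (s + S i * d + d)%nat with (s + S (S i) * d)%nat in H2 by (simpl; lia).
    replace (Z.of_nat (S (S i)) * k0)%Z with (k0 + Z.of_nat (S i) * k0)%Z by lia.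
    rewrite plus_IZR. lra. }
  specialize (Hi l Hl).
  replace (s + l * d)%nat with (s + d * l)%nat in Hi by lia.
  rewrite U_perm in Hi.
  assert (Hz2 : IZR (Z.of_nat l * k0) = INR d * IZR z) by lra.
  rewrite INR_IZR_INZ, <- mult_IZR in Hz2. apply eq_IZR in Hz2.
  unfold k0, d, t' in Hz2. rewrite Nat2Z.inj_sub in Hz2 by nia.
  rewrite Nat2Z.inj_add, Nat2Z.inj_mul in Hz2. nia.
Qed.

Lemma NN_lt : forall s t j j', U s + IZR j < U t + IZR j' -> (NN s j < NN t j')%Z.
Proof.
  intros s t j j' H. assert (U s + IZR (j - j') < U t) by (rewrite minus_IZR; lra).
  apply core_lt in H0. unfold NN. nia.
Qed.

Lemma NN_eq : forall s t j j', U s + IZR j = U t + IZR j' -> NN s j = NN t j'.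
Proof.
  intros s t j j' H. assert (U s + IZR (j - j') = U t) by (rewrite minus_IZR; lra).
  apply core_eq in H0. unfold NN. nia.
Qed.

Lemma NN_lt_inv : forall s t j j', (NN s j < NN t j')%Z -> U s + IZR j < U t + IZR j'.
Proof.
  intros s t j j' H. destruct (Rtotal_order (U s + IZR j) (U t + IZR j')) as [Q|[Q|Q]]; auto.
  - apply NN_eq in Q. lia.
  - apply NN_lt in Q. lia.
Qed.

Lemma NN_eq_inv : forall s t j j', NN s j = NN t j' -> U s + IZR j = U t + IZR j'.
Proof.
  intros s t j j' H. destruct (Rtotal_order (U s + IZR j) (U t + IZR j')) as [Q|[Q|Q]]; auto.
  - apply NN_lt in Q. lia.
  - apply NN_lt in Q. lia.
Qed.


Definition LZ : Z := Z.of_nat l.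

Lemma LZ_pos : (0 < LZ)%Z.
Proof. unfold LZ. lia. Qed.

Lemma gcd_1 : Z.gcd z LZ = 1%Z.
Proof.
  set (g := Z.gcd z LZ).
  assert (Hg0 : (0 <= g)%Z) by apply Z.gcd_nonneg.
  destruct (Z.gcd_divide_l z LZ) as [z' Hz'].
  destruct (Z.gcd_divide_r z LZ) as [l' Hl'].
  fold g in Hz', Hl'.
  assert (HL := LZ_pos).
  destruct (Z.eq_dec g 1) as [E1|N1]; auto. exfalso.
  assert (g <> 0)%Z by (intro Q; rewrite Q in Hl'; lia).
  assert (Hl'pos : (0 < l')%Z) by nia.
  assert (Hl'lt : (l' < LZ)%Z) by nia.
  assert (HN : NN (Z.to_nat l') (- z') = NN 0 0).
  { unfold NN. rewrite Z2Nat.id by lia. fold LZ. rewrite Hz', Hl'. simpl. ring. }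
  apply NN_eq_inv in HN. simpl in HN.
  assert (Hgg : gg (Z.to_nat l') = gg 0).
  { apply (lift_same _ _ (U 0)); auto using gg01. rewrite <- (Rplus_0_r (U 0)).
    replace 0 with (IZR 0) at 2 by auto. rewrite <- HN. apply lift_add_int, U_lift.
    apply U_lift. }
  apply (gg_distinct 0 (Z.to_nat l')); auto; unfold LZ in *; lia.
Qed.

Definition bez : {ab : Z * Z | (fst ab * z + snd ab * LZ = 1)%Z}.
Proof.
  apply constructive_indefinite_description.
  destruct (Z.gcd_bezout z LZ 1 gcd_1) as [a [b H]]. exists (a, b). simpl. auto.
Defined.

Definition ca : Z := fst (proj1_sig bez).
Definition cb : Z := snd (proj1_sig bez).
Lemma cab : (ca * z + cb * LZ = 1)%Z.
Proof. unfold ca, cb. destruct bez. simpl. auto. Qed.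

Definition tt (i : Z) : nat := Z.to_nat ((ca * i) mod LZ).
Definition jj (i : Z) : Z := (i * cb + ((ca * i) / LZ) * z)%Z.

Lemma tt_lt : forall i, (tt i < l)%nat.
Proof.
  intros i. unfold tt. assert (H := Z.mod_pos_bound (ca * i) LZ LZ_pos). unfold LZ in *. lia.
Qed.

Lemma NN_tt : forall i, NN (tt i) (jj i) = i.
Proof.
  intros i. unfold NN, tt, jj. fold LZ.
  assert (H := Z.mod_pos_bound (ca * i) LZ LZ_pos).
  rewrite Z2Nat.id by lia.
  assert (Hd := Z.div_mod (ca * i) LZ ltac:(assert (X := LZ_pos); lia)).
  assert (Hc := cab).
  set (q := ((ca * i) / LZ)%Z) in *. set (r := ((ca * i) mod LZ)%Z) in *.
  assert (r = ca * i - LZ * q)%Z by lia. rewrite H0.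
  replace i with (i * (ca * z + cb * LZ))%Z at 3 by (rewrite Hc; ring). ring.
Qed.

Definition QQ (i : Z) : R := U (tt i) + IZR (jj i).

Lemma QQ_rep : forall i t j, NN t j = i -> QQ i = U t + IZR j.
Proof. intros i t j H. unfold QQ. apply NN_eq_inv. rewrite NN_tt. auto. Qed.

Lemma QQ_lt : forall i i', (i < i')%Z -> QQ i < QQ i'.
Proof. intros i i' H. unfold QQ. apply NN_lt_inv. rewrite !NN_tt. auto. Qed.

Lemma QQ_le : forall i i', (i <= i')%Z -> QQ i <= QQ i'.
Proof. intros i i' H. destruct (Z.eq_dec i i'). subst; lra. left; apply QQ_lt; lia. Qed.

Lemma QQ_lt_iff : forall i i', (i < i')%Z <-> QQ i < QQ i'.
Proof.
  intros i i'. split. apply QQ_lt. intros H. destruct (Z_lt_le_dec i i'); auto.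
  apply QQ_le in l0. lra.
Qed.

Lemma QQ_lift : forall i, lift (gg (tt i)) (QQ i).
Proof. intros i. unfold QQ. apply lift_add_int, U_lift. Qed.

Lemma QQ_0 : QQ 0 = v.
Proof. rewrite (QQ_rep 0 0 0) by (unfold NN; ring). unfold U. simpl. lra. Qed.

Lemma QQ_shift : forall i c, QQ (i + c * LZ) = QQ i + IZR c.
Proof.
  intros i c. rewrite (QQ_rep (i + c * LZ) (tt i) (jj i + c)).
  unfold QQ. rewrite plus_IZR. lra.
  unfold NN in *. assert (H := NN_tt i). unfold NN in H. fold LZ in *. lia.
Qed.

Lemma QQ_L : QQ LZ = v + 1.
Proof. replace LZ with (0 + 1 * LZ)%Z by ring. rewrite QQ_shift, QQ_0. simpl. lra. Qed.

Lemma QQ_range : forall i, (0 <= i < LZ)%Z -> v <= QQ i < v + 1.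
Proof.
  intros i Hi. rewrite <- QQ_L, <- QQ_0. split. apply QQ_le; lia. apply QQ_lt; lia.
Qed.

Definition ff (i : nat) : R := gg (tt (Z.of_nat i)).

Lemma ff_lift_mod : forall i, lift (ff (i mod l)) (QQ (Z.of_nat i)).
Proof.
  intros i. unfold ff.
  assert (Hd : Z.of_nat i = (Z.of_nat (i mod l) + Z.of_nat (i / l) * LZ)%Z).
  { unfold LZ. rewrite (Nat.div_mod_eq i l) at 1. lia. }
  rewrite Hd, QQ_shift. apply lift_add_int, QQ_lift.
Qed.

Lemma z_lt_l : (z < LZ)%Z.
Proof.
  destruct (Z_lt_le_dec z LZ); auto. exfalso.
  apply QQ_le in l0. rewrite QQ_L in l0.
  rewrite (QQ_rep z 1 0) in l0 by (unfold NN; ring).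
  destruct (U_step 0) as [Us [_ Hc]]. rewrite Us in l0.
  assert (U0 : U 0 = v) by (unfold U; simpl; lra). rewrite U0 in l0. simpl in Hc. simpl in l0. lra.
Qed.

Lemma ff_edge : forall i s, (i < l)%nat -> (1 <= s <= Z.to_nat z)%nat ->
  E (ff i) (ff ((i + s) mod l)).
Proof.
  intros i s Hi Hs.
  set (t := tt (Z.of_nat i)).
  assert (Hsucc : QQ (Z.of_nat i + z) = U (S t) + IZR (jj (Z.of_nat i))).
  { apply QQ_rep. unfold NN. assert (H := NN_tt (Z.of_nat i)). unfold NN in H. fold t in H. lia. }
  destruct (U_step t) as [Us [c0 c1]].
  assert (Hx : QQ (Z.of_nat i) = U t + IZR (jj (Z.of_nat i))) by auto.
  assert (Ly := ff_lift_mod (i + s)).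
  assert (Hlt1 : QQ (Z.of_nat i) < QQ (Z.of_nat (i + s))) by (apply QQ_lt; lia).
  assert (Hle2 : QQ (Z.of_nat (i + s)) <= QQ (Z.of_nat i + z)) by (apply QQ_le; lia).
  assert (Lx : lift (ff i) (QQ (Z.of_nat i))) by apply QQ_lift.
  assert (Ls : lift (gg (S t)) (QQ (Z.of_nat i + z))).
  { rewrite Hsucc. apply lift_add_int, U_lift. }
  assert (Vy : V (ff ((i + s) mod l))) by (unfold ff; apply gg_V).
  destruct (Nat.eq_dec s (Z.to_nat z)) as [Es|Ns].
  - assert (Heq : ff ((i + s) mod l) = gg (S t)).
    { apply (lift_same _ _ (QQ (Z.of_nat i + z))); auto using gg01. unfold ff; apply gg01.
      replace (Z.of_nat i + z)%Z with (Z.of_nat (i + s)) by lia. auto. }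
    rewrite Heq. apply gg_edge.
  - assert (Hlt2 : QQ (Z.of_nat (i + s)) < QQ (Z.of_nat i + z)) by (apply QQ_lt; lia).
    assert (Hcd : cd (ff i) (ff ((i + s) mod l)) = QQ (Z.of_nat (i + s)) - QQ (Z.of_nat i)).
    { apply cd_lift; auto. lra. }
    assert (Hcd2 : cd (gg t) (gg (S t)) = QQ (Z.of_nat i + z) - QQ (Z.of_nat i)).
    { apply cd_lift; [exact Lx | exact Ls | lra]. }
    unfold ff in Hcd; fold t in Hcd.
    assert (Hrng : 0 < cd (gg t) (gg (tt (Z.of_nat ((i + s) mod l)))) < cd (gg t) (gg (S t))) by lra.
    destruct (HC (gg t) (gg (S t)) (gg_edge t) _ Vy Hrng) as [Hr _]. exact Hr.
Qed.

Lemma ff_wcyc : forall i j m, (i < l)%nat -> (j < l)%nat -> (m < l)%nat ->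
  wcyc (INR i / INR l) (INR j / INR l) (INR m / INR l) -> wcyc (ff i) (ff j) (ff m).
Proof.
  intros i j m Hi Hj Hm Hw.
  assert (Hl0 : (0 < l)%nat) by lia.
  assert (R1 : forall x, (x < l)%nat -> 0 <= INR x / INR l < 0 + 1).
  { intros x Hx. rewrite Rplus_0_l. apply INR_div_range; auto. }
  assert (R2 : forall x, (x < l)%nat -> v <= QQ (Z.of_nat x) < v + 1).
  { intros x Hx. apply QQ_range. unfold LZ. lia. }
  assert (C : forall x y, (x < l)%nat -> (y < l)%nat ->
     (INR x / INR l < INR y / INR l <-> QQ (Z.of_nat x) < QQ (Z.of_nat y))).
  { intros x y Hx Hy. rewrite INR_div_lt by auto. rewrite <- QQ_lt_iff. lia. }
  apply (wcyc_transfer (INR i / INR l) (INR j / INR l) (INR m / INR l)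
           (INR i / INR l) (INR j / INR l) (INR m / INR l) 0
           (ff i) (ff j) (ff m) (QQ (Z.of_nat i)) (QQ (Z.of_nat j)) (QQ (Z.of_nat m)) v);
    try apply lift_refl; try apply QQ_lift; auto.
Qed.

Lemma two_z_lt : (2 * Z.to_nat z < l)%nat.
Proof.
  assert (Hzl := z_lt_l). unfold LZ in Hzl.
  destruct (Nat.lt_ge_cases (2 * Z.to_nat z) l) as [H|H]; auto. exfalso.
  set (s := (l - Z.to_nat z)%nat).
  assert (E1 : E (ff 0) (ff s)).
  { assert (X := ff_edge 0 s ltac:(lia) ltac:(unfold s; lia)).
    rewrite Nat.add_0_l, Nat.mod_small in X by (unfold s; lia). auto. }
  assert (E2 : E (ff s) (ff 0)).
  { assert (X := ff_edge s (Z.to_nat z) ltac:(unfold s; lia) ltac:(lia)).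
    replace (s + Z.to_nat z)%nat with l in X by (unfold s; lia).
    rewrite Nat.Div0.mod_same in X. auto. }
  destruct HD as [_ [_ [_ Hop]]]. apply (Hop _ _ E1 E2).
Qed.

Lemma orbit_hom : exists W, (forall y, In y W -> V y) /\ wf_set E W (IZR z / IZR LZ).
Proof.
  exists (map gg (seq 0 l)). split.
  { intros y Hy. apply in_map_iff in Hy. destruct Hy as [t [<- _]]. apply gg_V. }
  exists l, (Z.to_nat z), ff. split; [lia|]. split; [apply two_z_lt|]. split.
  - split; [|split; [|split]].
    + intros i Hi. unfold ff. apply in_map. apply in_seq. assert (H := tt_lt (Z.of_nat i)). lia.
    + intros i s Hi Hs. apply ff_edge; auto.
    + intros i j m Hi Hj Hm. apply ff_wcyc; auto.
    + intros _. exists 0%nat, 1%nat. split. lia. split. assert (H := l_ge2). lia.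
      intro Q. assert (L0 := QQ_lift 0). assert (L1 := QQ_lift 1).
      assert (H01 : QQ 0 < QQ 1) by (apply QQ_lt; lia).
      assert (H1L : QQ 1 < QQ LZ) by (apply QQ_lt; assert (H := l_ge2); unfold LZ; lia).
      rewrite QQ_L, QQ_0 in *. unfold ff in Q. simpl in Q.
      replace (Z.of_nat 1) with 1%Z in Q by auto.
      rewrite Q in L0. destruct (lift_diff_int _ _ _ L0 L1) as [c Hc].
      assert (c = 0)%Z by (apply int_small; lra). subst. simpl in Hc. lra.
  - rewrite !INR_IZR_INZ. unfold LZ. rewrite Z2Nat.id by lia. auto.
Qed.

End Greedy.

Lemma wf_set_le1 : forall E W x, wf_set E W x -> x <= 1.
Proof.
  intros E W x [n [k [f [Hn [Hk [_ ->]]]]]].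
  assert (0 < INR n) by (apply lt_0_INR; lia).
  assert (INR k <= INR n) by (apply le_INR; lia).
  apply Rmult_le_reg_r with (INR n); auto. unfold Rdiv. rewrite Rmult_assoc, Rinv_l by lra. lra.
Qed.

Lemma lub_of_elem : forall E W y, wf_set E W y -> exists x, is_lub (wf_set E W) x /\ y <= x.
Proof.
  intros E W y Hy.
  destruct (completeness (wf_set E W)) as [x Hx].
  - exists 1. intros t Ht. apply (wf_set_le1 E W t Ht).
  - exists y; auto.
  - exists x. split; auto. apply Hx; auto.
Qed.

Theorem mainTheorem9 (V : R -> Prop) (E : R -> R -> Prop) (p q : Z) :
  directed_graph V E -> cyclic_graph V E ->
  (0 < q)%Z -> Z.gcd p q = 1%Z ->
  wf_is V E (IZR p / IZR q) ->
  forall v, V v -> periodic E v ->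
  forall l, orbit_length E v l ->
    Z.of_nat l = q /\ is_lub (gamma_set E v l) (IZR p).
Proof.
  intros HD HC Hq Hgcd Hwf v Hv _ l [Hper Hmin].
  destruct Hper as [Hl1 [g [Hlub [[z Hz] Hach]]]]. subst g.
  destruct Hach as [w0 [Hw0 Hlen]].
  assert (Hopt : forall w, walk E v l w -> walk_len w l <= IZR z).
  { intros w Hw. apply Hlub. exists w. split; auto. }
  assert (Hz0 : (0 <= z)%Z).
  { assert (0 <= IZR z).
    { apply (Rle_trans _ (walk_len (fun _ => v) l)).
      - clear. induction l; simpl. lra. rewrite cd_self. lra.
      - apply Hopt. split; auto. }
    apply le_IZR. auto. }
  assert (Hl0 : 0 < INR l) by (apply lt_0_INR; lia).
  assert (Hq0 : 0 < IZR q) by (apply IZR_lt; auto).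
  assert (HA : IZR p / IZR q <= IZR z / INR l).
  { destruct Hwf as [_ Hleast]. apply Hleast.
    intros x [W [HW Hx]]. destruct Hx as [_ Hx]. apply Hx.
    intros y [n [k [f [Hn [Hk [Hhom ->]]]]]].
    assert (Hn0 : 0 < INR n) by (apply lt_0_INR; lia).
    destruct k as [|k].
    - simpl. unfold Rdiv. rewrite Rmult_0_l. apply Rmult_le_pos. apply IZR_le; auto.
      left; apply Rinv_0_lt_compat; auto.
    - assert (Hb := hom_bound V E HD HC v l z Hv Hopt W n (S k) f HW Hhom ltac:(lia) Hk).
      assert (Hb' : INR l * INR (S k) <= INR n * IZR z).
      { rewrite !INR_IZR_INZ, <- !mult_IZR. apply IZR_le. lia. }
      apply (Rmult_le_reg_r (INR n * INR l)). nra.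
      unfold Rdiv. field_simplify; try lra; try nra. }
  assert (H0 : 0 <= IZR p / IZR q).
  { destruct Hwf as [Hub _].
    assert (Hel : wf_set E (v :: nil) 0).
    { exists 1%nat, 0%nat, (fun _ => v). split; [lia|]. split; [lia|]. split.
      - split; [|split; [|split]].
        + intros i _. left; auto.
        + intros i s _ Hs. lia.
        + intros i j m _ _ _ _. unfold wcyc. rewrite !cd_self. lra.
        + intros; lia.
      - simpl. unfold Rdiv. lra. }
    destruct (lub_of_elem E (v :: nil) 0 Hel) as [x [Hx Hx0]].
    apply Rle_trans with x; auto. apply Hub. exists (v :: nil). split; auto.
    intros y [<-|[]]; auto. }
  destruct (Z.eq_dec z 0) as [Ez|Nz].
  -
    subst z. simpl in HA. unfold Rdiv in HA. rewrite Rmult_0_l in HA.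
    assert (Hp : IZR p / IZR q = 0) by lra.
    assert (p = 0)%Z.
    { apply eq_IZR. apply (Rmult_eq_reg_r (/ IZR q)). simpl. rewrite Rmult_0_l. exact Hp.
      apply Rinv_neq_0_compat. lra. }
    subst p. rewrite Z.gcd_0_l in Hgcd. assert (q = 1)%Z by lia. subst q.
    assert (Hp1 : periodic_at E v 1).
    { split. lia. exists 0. split; [split|split].
      - intros x [w [Hw ->]].
        assert (Hc := concat_walk E v 1 (l - 1) w (fun _ => w 1%nat) Hw).
        assert (Hc2 : walk E (w 1%nat) (l - 1) (fun _ => w 1%nat)).
        { split; auto. }
        specialize (Hc Hc2). replace (1 + (l - 1))%nat with l in Hc by lia.
        assert (Hcl := Hopt _ Hc).
        assert (Heql : (1 + (l - 1))%nat = l) by lia.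
        rewrite <- Heql in Hcl. rewrite concat_len in Hcl by auto.
        assert (walk_len (fun _ : nat => w 1%nat) (l - 1) = 0).
        { clear. induction (l - 1)%nat; simpl; auto. rewrite IHn, cd_self. lra. }
        lra.
      - intros b Hb. apply Hb. exists (fun _ => v). split. split; auto. simpl. rewrite cd_self. lra.
      - exists 0%Z. auto.
      - exists (fun _ => v). split. split; auto. simpl. rewrite cd_self. lra. }
    apply Hmin in Hp1. assert (l = 1)%nat by lia. subst l. split; auto.
  -
    assert (Hz1 : (1 <= z)%Z) by lia.
    destruct (orbit_hom V E HD HC v l z w0 Hv Hw0 (eq_sym Hlen) Hopt Hmin Hz1 ltac:(lia)) as [W [HW Hel]].
    destruct (lub_of_elem E W _ Hel) as [x [Hx Hxe]].
    assert (HB : x <= IZR p / IZR q).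
    { destruct Hwf as [Hub _]. apply Hub. exists W. split; auto. }
    unfold LZ in Hxe. rewrite <- INR_IZR_INZ in Hxe.
    assert (Heq : IZR p / IZR q = IZR z / INR l) by lra.
    assert (Hcross : (p * Z.of_nat l = z * q)%Z).
    { apply eq_IZR. rewrite !mult_IZR, <- INR_IZR_INZ.
      unfold Rdiv in Heq. apply (Rmult_eq_reg_r (/ IZR q * / INR l)).
      field_simplify; try lra. field_simplify in Heq; try lra.
      apply Rmult_integral_contrapositive; split; apply Rinv_neq_0_compat; lra. }
    assert (Hg := gcd_1 V E HD HC v l z w0 Hv Hw0 (eq_sym Hlen) Hopt Hmin Hz1 ltac:(lia)). unfold LZ in Hg.
    assert (D1 : (q | Z.of_nat l)%Z).
    { apply (Z.gauss q p). exists z. lia. rewrite Z.gcd_comm. auto. }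
    assert (D2 : (Z.of_nat l | q)%Z).
    { apply (Z.gauss (Z.of_nat l) z). exists p. lia. rewrite Z.gcd_comm. auto. }
    assert (Hlq : Z.of_nat l = q) by (apply Z.divide_antisym_nonneg; auto; lia).
    split; auto.
    assert (p = z) by (rewrite Hlq in Hcross; nia). subst p. auto.
Qed.
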